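(* Let $G_1$ and $G_2$ be graphs on $n$ nodes with Laplacian matrices $Q_1,Q_2$, let $k\in\{1,\dots,n\}$, and let $\hat B$ be an $n\times n$ zero-one matrix with exactly $k$ ones in every row and every column. For $p\ge 0$ let $$Q(p)=\begin{bmatrix} Q_1+kpI & -p\hat B\\ -p\hat B^T & Q_2+kpI\end{bmatrix},$$ with eigenvalues $0=\mu_N(p)\le \mu_{N-1}(p)\le\dots\le\mu_1(p)$, $N=2n$. Define the transition threshold $p^*=\sup\big(\{0\}\cup\{p>0:\ \mu_{N-1}(p)=2kp\}\big)$. Then $$p^*\le \frac{1}{k}\min\big(\mu_{n-1}(Q_1),\ \mu_{n-1}(Q_2)\big),$$ where $\mu_{n-1}(Q_i)$ denotes the second smallest eigenvalue (algebraic connectivity) of $Q_i$.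
   Context: $Q(p)$ is the Laplacian of the two-layer interdependent network with a $k$-to-$k$ interconnection of weight $p$; $2kp$ is always an eigenvalue of $Q(p)$ (eigenvector $[u^T,-u^T]^T$). The paper describes $p^*$ as the coupling value beyond which $\mu_{N-1}(p)\neq 2kp$; here it is formalized as the supremum above. *)

(* Defs.v *)
From HB Require Import structures.
From mathcomp Require Import all_boot all_order all_algebra.
From mathcomp Require Import boolp classical_sets reals.
From Stdlib Require Import ClassicalEpsilon.
Set Implicit Arguments. Unset Strict Implicit. Unset Printing Implicit Defensive.
Import Order.TTheory GRing.Theory Num.Theory.
Local Open Scope ring_scope.

Definition laplacian (R : ringType) (n : nat) (e : rel 'I_n) : 'M[R]_n :=
  \matrix_(i, j) (if i == j then (#|[set l | e i l]|)%:R else - (e i j)%:R).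

Definition is_spectrum (R : realFieldType) (m : nat) (A : 'M[R]_m) (s : seq R) :=
  sorted <=%R s /\ char_poly A = \prod_(x <- s) ('X - x%:P).

Definition spectrum (R : realFieldType) (m : nat) (A : 'M[R]_m) : seq R :=
  epsilon (inhabits [::]) (is_spectrum A).

(* eig_asc A i = the (i+1)-th smallest eigenvalue of A (0-based index i). *)
Definition eig_asc (R : realFieldType) (m : nat) (A : 'M[R]_m) (i : nat) : R :=
  nth 0 (spectrum A) i.

Definition supraQ (R : ringType) (n k : nat) (Q1 Q2 B : 'M[R]_n) (p : R)
  : 'M[R]_(n + n) :=
  block_mx (Q1 + (k%:R * p)%:M) (- (p *: B))
           (- (p *: B^T)) (Q2 + (k%:R * p)%:M).

Definition pstar (R : realType) (n k : nat) (Q1 Q2 B : 'M[R]_n) : R :=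
  sup ([set 0] `|` [set p | 0 < p /\ eig_asc (supraQ k Q1 Q2 B p) 1 = 2 * k%:R * p]).

(* Main.v *)
Require Import Defs.
From HB Require Import structures.
From mathcomp Require Import all_boot all_order all_algebra.
From mathcomp Require Import boolp classical_sets reals.
From mathcomp Require Import complex spectral sesquilinear.
From Stdlib Require Import ClassicalEpsilon.
Import Order.TTheory GRing.Theory Num.Theory.
Local Open Scope ring_scope.
Set Implicit Arguments. Unset Strict Implicit.
Lemma char_poly_conj (F : fieldType) n (A P : 'M[F]_n) : P \in unitmx ->
  char_poly (invmx P *m A *m P) = char_poly A.
Proof.
move=> Pu; rewrite /char_poly /char_poly_mx !map_mxM.
have e : 'X%:M = map_mx polyC (invmx P) *m 'X%:M *m map_mx polyC P :> 'M[{poly F}]_n.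
  by rewrite scalar_mxC -mulmxA -map_mxM mulVmx // map_mx1 mulmx1.
rewrite [X in X - _]e -mulmxBl -mulmxBr !det_mulmx mulrC mulrA -det_mulmx.
by rewrite -map_mxM mulmxV // map_mx1 det1 mul1r.
Qed.
Local Notation toC R := (real_complex R).

Lemma real_spec (R : rcfType) m (M : 'M[R]_m) : M^T = M ->
  exists (P : 'M[R[i]]_m) (f : 'I_m -> R), P \is unitarymx /\
    map_mx (toC R) M = invmx P *m diag_mx (\row_i (f i)%:C%C) *m P.
Proof.
move=> Msym. set Mc := map_mx (toC R) M.
have Mh : Mc \is hermsymmx.
 refine (@realsym_hermsym _ m Mc _ _).
    apply/eqP; rewrite expr0 scale1r; apply/matrixP => i j; rewrite !mxE -[M in LHS]Msym mxE //.
  by apply/mxOverP => i j; rewrite mxE complex_real.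
have /orthomx_spectralP eM := hermitian_normalmx Mh.
have /mxOverP dr := hermitian_spectral_diag_real Mh.
exists (spectralmx Mc), (fun i => complex.Re (spectral_diag Mc 0 i)); split.
  exact: spectral_unitarymx.
rewrite {1}eM; congr (_ *m _ *m _); congr diag_mx.
by apply/rowP => i; rewrite mxE RRe_real // ord1 dr.
Qed.

Lemma spec_charpoly (R : rcfType) m (M : 'M[R]_m) (P : 'M[R[i]]_m) (f : 'I_m -> R) :
  P \is unitarymx ->
  map_mx (toC R) M = invmx P *m diag_mx (\row_i (f i)%:C%C) *m P ->
  char_poly M = \prod_i ('X - (f i)%:P).
Proof.
move=> Pu eM; apply: (@map_poly_inj _ _ (toC R)).
rewrite map_char_poly eM char_poly_conj ?unitarymx_unit //.
rewrite char_poly_trig ?diag_mx_is_trig // rmorph_prod; apply: eq_bigr => i _.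
by rewrite !mxE eqxx mulr1n rmorphB /= map_polyX map_polyC.
Qed.

Lemma spec_exists (R : rcfType) m (M : 'M[R]_m) : M^T = M -> exists s, is_spectrum M s.
Proof.
move=> /real_spec [P [f [Pu eM]]].
exists (sort <=%R [seq f i | i <- enum 'I_m]); split.
  by apply: sort_sorted; exact: le_total.
rewrite (spec_charpoly Pu eM) (perm_big _ (permEl (perm_sort _ _))) big_map.
by rewrite big_enum.
Qed.

Lemma spectrumP (R : realType) m (M : 'M[R]_m) : M^T = M -> is_spectrum M (spectrum M).
Proof.
move=> /spec_exists ex; rewrite /spectrum.
by apply: epsilon_spec; case: ex => s hs; exists s.
Qed.

Lemma spec_perm (R : rcfType) m (M : 'M[R]_m) s (f : 'I_m -> R) :
  is_spectrum M s -> char_poly M = \prod_i ('X - (f i)%:P) ->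
  perm_eq s [seq f i | i <- enum 'I_m].
Proof.
move=> [_ e1] e2; apply: prod_XsubC_eq; rewrite -e1 e2 big_map.
by rewrite big_enum.
Qed.
Lemma lap_sym (R : numDomainType) n (e : rel 'I_n) : symmetric e -> (laplacian R e)^T = laplacian R e.
Proof.
move=> se; apply/matrixP => i j; rewrite !mxE eq_sym.
by case: eqP => [->|_] //; rewrite se.
Qed.

Lemma deg_sum (R : numDomainType) n (e : rel 'I_n) b : symmetric e ->
  \sum_a ((e a b)%:R : R) = (#|[set l | e b l]|)%:R.
Proof.
move=> se; rewrite -natr_sum; congr (_%:R).
rewrite -sum1_card [RHS]big_mkcond /=; apply: eq_bigr => a _.
by rewrite inE se; case: (e b a).
Qed.

Lemma lap_row (R : numDomainType) n (e : rel 'I_n) (v : 'rV[R]_n) b :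
  symmetric e -> irreflexive e ->
  (v *m laplacian R e) 0 b = \sum_a (e a b)%:R * (v 0 b - v 0 a).
Proof.
move=> se ie.
have eL : forall a, laplacian R e a b = (a == b)%:R * (#|[set l | e b l]|)%:R - (e a b)%:R.
  move=> a; rewrite mxE; have [->|ne] := eqVneq a b.
    by rewrite ie mul1r subr0.
  by rewrite mul0r sub0r.
rewrite mxE; under eq_bigr => a _ do rewrite eL mulrBr.
rewrite sumrB (bigD1 b) //= eqxx mul1r big1 ?addr0; last first.
  by move=> a /negbTE ->; rewrite mul0r mulr0.
under [in RHS]eq_bigr => a _ do rewrite mulrBr.
rewrite sumrB -mulr_suml deg_sum // mulrC; congr (_ - _).
by apply: eq_bigr => a _; rewrite mulrC.
Qed.

Section RaySec.
Import Num.Def.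
Local Open Scope sesquilinear_scope.
Lemma count_card (T : finType) (a : pred T) : count a (enum T) = #|a|.
Proof. by rewrite cardE size_filter enumT. Qed.

Section Comb.
Variables (R : realDomainType) (m : nat) (f : 'I_m -> R) (s : seq R).
Hypotheses (ss : sorted <=%R s) (ps : perm_eq s [seq f i | i <- enum 'I_m]) (m2 : (1 < m)%N).

Lemma size_s : size s = m.
Proof. by rewrite (perm_size ps) size_map size_enum_ord. Qed.

Lemma comb_low : exists j0, forall j, j != j0 -> s`_1 <= f j.
Proof.
have c1 : (count (< s`_1)%R s <= 1)%N.
  rewrite leqNgt; apply/negP => /(nth_count_lt 0 ss); by rewrite ltxx.
rewrite (permP ps) count_map count_card in c1.
case: (pickP [pred i | f i < s`_1]) => [j0 /= hj0|none].
  exists j0 => j nj; rewrite leNgt; apply/negP => hj.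
  have : (1 < #|[pred i | (f i < s`_1)%R]|)%N.
    by apply/card_gt1P; exists j, j0; split => //.
  by rewrite ltnNge /preim /= c1.
exists (@Ordinal m 0 (ltnW m2)) => j _; rewrite leNgt; apply/negP => hj.
by have := none j; rewrite /= hj.
Qed.

Lemma comb_up : exists i0 i1, [/\ i0 != i1, f i0 <= s`_1 & f i1 <= s`_1].
Proof.
have c2 : (1 < count (<= s`_1)%R s)%N.
  rewrite ltnNge; apply/negP => h.
  have := @nth_count_gt _ _ s`_1 0 s 1 ss; rewrite h size_s m2 ltxx.
  by move/(_ isT).
rewrite (permP ps) count_map count_card in c2.
case/card_gt1P: c2 => i0 [i1 [h0 h1 ne]]; exists i0, i1; split => //.
Qed.
End Comb.

Section Ray.
Variables (R : rcfType) (m : nat) (P : 'M[R[i]]_m) (d : 'I_m -> R).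
Hypothesis Pu : P \is unitarymx.
Local Notation C := (R[i]).
Local Notation D := (diag_mx (\row_i (d i)%:C%C : 'rV[C]_m)).

Definition quad (A : 'M[C]_m) (v : 'rV[C]_m) : C := (v *m A *m v^t*) 0 0.

Lemma quad_diag (r c : 'rV[C]_m) :
  (c *m diag_mx r *m c^t*) 0 0 = \sum_i r 0 i * (c 0 i * (c 0 i)^*).
Proof.
rewrite mxE; apply: eq_bigr => i _; rewrite mul_mx_diag !mxE.
by rewrite mulrAC mulrC.
Qed.

Lemma quad_spec (c : 'rV[C]_m) : quad (invmx P *m D *m P) (c *m P) =
  \sum_i (d i)%:C%C * (c 0 i * (c 0 i)^*).
Proof.
rewrite /quad invmx_unitary // trmx_mul map_mxM !mulmxA !mulmxtVK //.
rewrite quad_diag; apply: eq_bigr => i _; by rewrite mxE.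
Qed.

Lemma dot_spec (c : 'rV[C]_m) : quad 1%:M (c *m P) = \sum_i c 0 i * (c 0 i)^*.
Proof.
rewrite /quad mulmx1 trmx_mul map_mxM mulmxA mulmxtVK // mxE.
by apply: eq_bigr => i _; rewrite !mxE.
Qed.

Lemma decompP (v : 'rV[C]_m) : v = (v *m P^t*) *m P.
Proof. by rewrite mulmxKtV. Qed.


Variable s : seq R.
Hypotheses (ss : sorted <=%R s) (ps : perm_eq s [seq d i | i <- enum 'I_m]) (m2 : (1 < m)%N).

Lemma ray_low (w1 w2 : 'rV[C]_m) : exists a b : C, ((a != 0) || (b != 0)) /\
  ((s`_1)%:C%C * quad 1%:M (a *: w1 + b *: w2) <= quad (invmx P *m D *m P) (a *: w1 + b *: w2)).
Proof.
have [j0 hj0] := comb_low ss ps m2.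
set al := (w1 *m P^t*) 0 j0; set be := (w2 *m P^t*) 0 j0.
suff key : forall a b, a * al + b * be = 0 ->
  (s`_1)%:C%C * quad 1%:M (a *: w1 + b *: w2) <= quad (invmx P *m D *m P) (a *: w1 + b *: w2).
  have [al0|aln0] := eqVneq al 0; have [be0|ben0] := eqVneq be 0.
  - exists 1, 0; split; first by rewrite oner_eq0.
    by apply: key; rewrite al0 be0 !mulr0 addr0.
  - exists be, (- al); split; first by rewrite ben0.
    by apply: key; rewrite mulrC mulNr addrN.
  - exists be, (- al); split; first by rewrite oppr_eq0 aln0 orbT.
    by apply: key; rewrite mulrC mulNr addrN.
  - exists be, (- al); split; first by rewrite oppr_eq0 aln0 orbT.
    by apply: key; rewrite mulrC mulNr addrN.
move=> a b hab; set v := a *: w1 + b *: w2.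
have cj0 : (v *m P^t*) 0 j0 = 0.
  by rewrite /v mulmxDl -!scalemxAl -hab /al /be !mxE.
rewrite [in X in _ * X](decompP v) [in X in _ <= X](decompP v) quad_spec dot_spec.
rewrite mulr_sumr; apply: ler_sum => i _.
have [->|nij] := eqVneq i j0; first by rewrite cj0 mul0r !mulr0.
by apply: ler_wpM2r; [exact: mul_conjC_ge0 | rewrite lecR; exact: hj0].
Qed.

Lemma two_sum (g : 'I_m -> C) (i0 i1 : 'I_m) (a b : C) : i0 != i1 ->
  let c := a *: delta_mx 0 i0 + b *: delta_mx 0 i1 : 'rV[C]_m in
  \sum_i g i * (c 0 i * (c 0 i)^*) = g i0 * (a * a^*) + g i1 * (b * b^*).
Proof.
move=> ne c; rewrite (bigD1 i0) //= (bigD1 i1) 1?eq_sym //= big1 ?addr0.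
  by rewrite /c !mxE !eqxx (negbTE ne) eq_sym (negbTE ne) !mulr1 !mulr0 addr0 add0r.
move=> i /andP [h1 h0]; rewrite /c !mxE (negbTE h1) (negbTE h0) !mulr0 addr0.
by rewrite mul0r mulr0.
Qed.

Lemma two_sum1 (i0 i1 : 'I_m) (a b : C) : i0 != i1 ->
  let c := a *: delta_mx 0 i0 + b *: delta_mx 0 i1 : 'rV[C]_m in
  \sum_i c 0 i * (c 0 i)^* = a * a^* + b * b^*.
Proof.
move=> ne c; rewrite (bigD1 i0) //= (bigD1 i1) 1?eq_sym //= big1 ?addr0.
  by rewrite /c !mxE !eqxx (negbTE ne) eq_sym (negbTE ne) !mulr1 !mulr0 addr0 add0r.
move=> i /andP [h1 h0]; rewrite /c !mxE (negbTE h1) (negbTE h0) !mulr0 addr0.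
by rewrite mul0r.
Qed.

Lemma ray_up : exists w1 w2 : 'rV[C]_m, forall a b : C,
  quad 1%:M (a *: w1 + b *: w2) = a * a^* + b * b^* /\
  quad (invmx P *m D *m P) (a *: w1 + b *: w2) <= (s`_1)%:C%C * (a * a^* + b * b^*).
Proof.
have [i0 [i1 [ne h0 h1]]] := comb_up ss ps m2.
exists (delta_mx 0 i0 *m P), (delta_mx 0 i1 *m P) => a b.
rewrite !scalemxAl -mulmxDl quad_spec dot_spec.
rewrite two_sum1 //.
split => //.
have := two_sum (fun i => (d i)%:C%C) a b ne; rewrite /= => ->.
rewrite mulrDr lerD // ler_wpM2r ?mul_conjC_ge0 // lecR //.
Qed.
End Ray.
End RaySec.

Lemma lap_psd (R : realType) n (e : rel 'I_n) : symmetric e -> irreflexive e ->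
  (1 < n)%N -> 0 <= eig_asc (laplacian R e) 1.
Proof.
move=> se ie n2; have [_ hc] := spectrumP (lap_sym R se).
rewrite /eig_asc; set s := spectrum _ in hc *; set x := s`_1.
have sz : size s = n.
  by have := size_char_poly (laplacian R e); rewrite hc size_prod_XsubC => -[].
have : eigenvalue (laplacian R e) x.
  by rewrite eigenvalue_root_char hc root_prod_XsubC mem_nth // sz.
case/eigenvalueP => v hv vn0.
pose i0 := @Ordinal n 0 (ltnW n2).
pose b := [arg max_(i > i0) `|v 0 i|]%O.
have hb : forall i, `|v 0 i| <= `|v 0 b|.
  by move=> i; rewrite /b; case: (arg_maxP (fun i => `|v 0 i|) (isT : predT i0)) => j _ /(_ i isT).
have vb0 : v 0 b != 0.
  apply/eqP => vb; move/eqP: vn0; apply; apply/rowP => i; rewrite mxE.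
  apply/eqP; rewrite -normr_le0; apply: le_trans (hb i) _; by rewrite vb normr0.
have key : x * (v 0 b ^+ 2) = \sum_a (e a b)%:R * (v 0 b ^+ 2 - v 0 a * v 0 b).
  have := lap_row v b se ie; rewrite hv mxE => h.
  rewrite expr2 mulrA h mulr_suml; apply: eq_bigr => a _; by rewrite -mulrA mulrBl.
have : 0 <= x * (v 0 b ^+ 2).
  rewrite key; apply: sumr_ge0 => a _; apply: mulr_ge0 => //.
  rewrite subr_ge0; apply: le_trans (ler_norm _) _.
  rewrite normrM -real_normK ?num_real // expr2.
  by apply: ler_wpM2r => //; exact: hb.
by rewrite pmulr_lge0 // exprn_even_gt0 // vb0.
Qed.

Section Core.
Import Num.Def.
Local Open Scope sesquilinear_scope.

Lemma core (R : realType) n N (A : 'M[R]_n) (Q : 'M[R]_N) (c : R)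
  (E : 'rV[R[i]]_n -> 'rV[R[i]]_N) :
  A^T = A -> Q^T = Q -> (1 < n)%N -> (1 < N)%N ->
  (forall a b w1 w2, E (a *: w1 + b *: w2) = a *: E w1 + b *: E w2) ->
  (forall y, quad 1%:M (E y) = quad 1%:M y) ->
  (forall y, quad (map_mx (toC R) Q) (E y) = quad (map_mx (toC R) A) y + c%:C%C * quad 1%:M y) ->
  eig_asc Q 1 <= eig_asc A 1 + c.
Proof.
move=> As Qs n2 N2 El Ed Eq.
have [ssA hA] := spectrumP As; have [ssQ hQ] := spectrumP Qs.
have [P [f [Pu eP]]] := real_spec As; have [P' [g [Pu' eP']]] := real_spec Qs.
have pA := spec_perm (conj ssA hA) (spec_charpoly Pu eP).
have pQ := spec_perm (conj ssQ hQ) (spec_charpoly Pu' eP').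
have [w1 [w2 hw]] := ray_up Pu ssA pA n2.
have [a [b [nab hab]]] := ray_low Pu' ssQ pQ N2 (E w1) (E w2).
have [hd hq] := hw a b.
rewrite -El Ed -eP' Eq hd eP in hab.
set t := a * a^* + b * b^* in hab hd hq.
have tp : 0 < t.
  case/orP: nab => nz.
    by apply: ltr_wpDr; [exact: mul_conjC_ge0 | rewrite mul_conjC_gt0].
  by apply: ltr_wpDl; [exact: mul_conjC_ge0 | rewrite mul_conjC_gt0].
rewrite /eig_asc -lecR rmorphD /=.
rewrite -(ler_pM2r tp) mulrDl; apply: (le_trans hab); rewrite lerD2r.
exact: hq.
Qed.
End Core.

Section Blocks.
Import Num.Def.
Local Open Scope sesquilinear_scope.
Variables (R : rcfType) (n : nat).
Local Notation C := (R[i]).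

Lemma quad_scal (A : 'M[C]_n) c (y : 'rV[C]_n) :
  quad (A + c%:M) y = quad A y + c * quad 1%:M y.
Proof.
rewrite /quad mulmxDr mulmxDl mxE; congr (_ + _). rewrite mul_mx_scalar mulmx1. by rewrite -scalemxAl mxE.
Qed.

Lemma quadE1 (A B D F : 'M[C]_n) (y : 'rV[C]_n) :
  quad (block_mx A B D F) (row_mx y 0) = quad A y.
Proof.
rewrite /quad mul_row_block !mul0mx !addr0 tr_row_mx map_col_mx mul_row_col.
by rewrite trmx0 map_mx0 mulmx0 addr0.
Qed.

Lemma quadE2 (A B D F : 'M[C]_n) (y : 'rV[C]_n) :
  quad (block_mx A B D F) (row_mx 0 y) = quad F y.
Proof.
rewrite /quad mul_row_block !mul0mx !add0r tr_row_mx map_col_mx mul_row_col.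
by rewrite trmx0 map_mx0 mulmx0 add0r.
Qed.

Lemma dotE1 (y : 'rV[C]_n) : quad 1%:M (row_mx y 0 : 'rV_(n + n)) = quad 1%:M y.
Proof. by rewrite scalar_mx_block quadE1. Qed.

Lemma dotE2 (y : 'rV[C]_n) : quad 1%:M (row_mx 0 y : 'rV_(n + n)) = quad 1%:M y.
Proof. by rewrite scalar_mx_block quadE2. Qed.
End Blocks.

Unset Implicit Arguments.

Theorem mainTheorem2 (R : realType) (n k : nat) (e1 e2 : rel 'I_n) (B : 'M[R]_n) :
  (1 < n)%N ->
  symmetric e1 -> irreflexive e1 ->
  symmetric e2 -> irreflexive e2 ->
  (0 < k)%N -> (k <= n)%N ->
  (forall i j, B i j = 0 \/ B i j = 1) ->
  (forall i, \sum_j B i j = k%:R) ->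
  (forall j, \sum_i B i j = k%:R) ->
  pstar k (laplacian R e1) (laplacian R e2) B
    <= k%:R^-1 * Num.min (eig_asc (laplacian R e1) 1) (eig_asc (laplacian R e2) 1).
Proof.
move=> n2 se1 ie1 se2 ie2 k0 kn _ _ _.
have L1s := lap_sym R se1; have L2s := lap_sym R se2.
have h1 := lap_psd R se1 ie1 n2; have h2 := lap_psd R se2 ie2 n2.
set L1 := laplacian R e1 in L1s h1 *; set L2 := laplacian R e2 in L2s h2 *.
have Qs : forall p, (supraQ k L1 L2 B p)^T = supraQ k L1 L2 B p.
  move=> p; rewrite /supraQ tr_block_mx !raddfD /= !raddfN /= !linearZ /= trmxK.
  by rewrite !tr_scalar_mx L1s L2s.
have NN : (1 < n + n)%N by rewrite (ltn_addr _ n2).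
have key1 : forall p, eig_asc (supraQ k L1 L2 B p) 1 <= eig_asc L1 1 + k%:R * p.
  move=> p; apply: (@core R n (n + n) L1 _ _ (fun y => row_mx y 0)) => //.
  - by move=> a b w1 w2; rewrite !scale_row_mx [RHS]add_row_mx !scaler0 addr0.
  - exact: dotE1.
  - by move=> y; rewrite /supraQ map_block_mx quadE1 map_mxD map_scalar_mx quad_scal.
have key2 : forall p, eig_asc (supraQ k L1 L2 B p) 1 <= eig_asc L2 1 + k%:R * p.
  move=> p; apply: (@core R n (n + n) L2 _ _ (fun y => row_mx 0 y)) => //.
  - by move=> a b w1 w2; rewrite !scale_row_mx [RHS]add_row_mx !scaler0 addr0.
  - exact: dotE2.
  - by move=> y; rewrite /supraQ map_block_mx quadE2 map_mxD map_scalar_mx quad_scal.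
have kp : (0 : R) < k%:R by rewrite ltr0n.
rewrite /pstar; apply: ge_sup; first by exists 0; left.
move=> p [->|[p0 hp]].
  by rewrite mulr_ge0 ?invr_ge0 ?ler0n // le_min h1 h2.
have hk1 : k%:R * p <= eig_asc L1 1.
  by have := key1 p; rewrite hp -mulrA mulr_natl mulr2n lerD2r.
have hk2 : k%:R * p <= eig_asc L2 1.
  by have := key2 p; rewrite hp -mulrA mulr_natl mulr2n lerD2r.
rewrite -(ler_pM2l kp) mulrA mulfV ?mul1r ?lt0r_neq0 // le_min hk1 hk2 //.
Qed.
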